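(* Suppose that $S$ is a finite regular semigroup of minimum cardinality with the property that $S$ possesses a permutation matching but no involution matching. Then $S$ is a $0$-rectangular band.
   Context: For an element $a$ of a semigroup $S$, $V(a)=\{b\in S: aba=a,\ bab=b\}$ is the set of inverses of $a$. A permutation matching of a finite regular semigroup $S$ is a bijection $\phi:S\to S$ with $\phi(a)\in V(a)$ for all $a\in S$. An involution matching is a permutation matching $\phi$ with $\phi\circ\phi=\mathrm{id}_S$. A $0$-rectangular band is a completely $0$-simple semigroup all of whose $\mathscr{H}$-classes are trivial (equivalently, a Rees matrix semigroup $\mathcal{M}^0[\{1\};I,\Lambda;P]$ over the trivial group with a regular sandwich matrix $P$). *)

(* Defs.v *)
From mathcomp Require Import all_boot.
Set Implicit Arguments. Unset Strict Implicit. Unset Printing Implicit Defensive.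

Section Semigroups.
Variables (T : finType) (op : T -> T -> T).

Definition semigroup : Prop := associative op.

Definition regular_sg : Prop := forall a : T, exists b : T, op (op a b) a = a.

Definition inverse_of (a b : T) : Prop := op (op a b) a = a /\ op (op b a) b = b.

Definition permutation_matching (phi : T -> T) : Prop :=
  bijective phi /\ forall a, inverse_of a (phi a).

Definition involution_matching (phi : T -> T) : Prop :=
  permutation_matching phi /\ forall a, phi (phi a) = a.

Definition has_permutation_matching : Prop := exists phi, permutation_matching phi.
Definition has_involution_matching : Prop := exists phi, involution_matching phi.

Definition is_zero (z : T) : Prop := forall x, op z x = z /\ op x z = z.

Definition is_ideal (I : {set T}) : Prop :=
  I != set0 /\ forall x s, x \in I -> op s x \in I /\ op x s \in I.

Definition idempotent (e : T) : Prop := op e e = e.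

Definition zero_simple (z : T) : Prop :=
  is_zero z /\ (exists a b, op a b <> z) /\
  forall I : {set T}, is_ideal I -> I = [set z] \/ I = setT.

Definition primitive_idempotent (z e : T) : Prop :=
  idempotent e /\ e <> z /\
  forall f, idempotent f -> f <> z -> op e f = f -> op f e = f -> f = e.

Definition completely_zero_simple : Prop :=
  exists z, zero_simple z /\ exists e, primitive_idempotent z e.

(* principal right / left ideals a S^1 and S^1 a, as predicates *)
Definition in_right_ideal (a x : T) : Prop := x = a \/ exists s, x = op a s.
Definition in_left_ideal (a x : T) : Prop := x = a \/ exists s, x = op s a.

Definition greenH (a b : T) : Prop :=
  (forall x, in_right_ideal a x <-> in_right_ideal b x) /\
  (forall x, in_left_ideal a x <-> in_left_ideal b x).

Definition zero_rectangular_band : Prop :=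
  completely_zero_simple /\ forall a b, greenH a b -> a = b.

End Semigroups.

(* Main.v *)
Require Import Defs.
From mathcomp Require Import all_boot zify.
Set Implicit Arguments. Unset Strict Implicit. Unset Printing Implicit Defensive.

Section Basic.
Variables (T : finType) (op : T -> T -> T).
Hypothesis A : associative op.

Definition lm (s : option T) x := if s is Some s then op s x else x.
Definition rm (t : option T) x := if t is Some t then op x t else x.
Definition leR x y := [exists t, x == rm t y].
Definition leL x y := [exists s, x == lm s y].
Definition leJ x y := [exists s, [exists t, x == rm t (lm s y)]].
Definition eqR x y := leR x y && leR y x.
Definition eqL x y := leL x y && leL y x.
Definition eqJ x y := leJ x y && leJ y x.
Definition eqH x y := eqR x y && eqL x y.
Definition sinv a b := (op (op a b) a == a) && (op (op b a) b == b).
Definition pw a n := iter n (op a) a.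

Definition omul (s s' : option T) : option T :=
  match s, s' with Some a, Some b => Some (op a b) | Some a, None => Some a | None, x => x end.

Lemma lm_lm s s' x : lm s (lm s' x) = lm (omul s s') x.
Proof. by case: s; case: s' => //= *; rewrite A. Qed.
Lemma rm_rm t t' x : rm t (rm t' x) = rm (omul t' t) x.
Proof. by case: t; case: t' => //= *; rewrite A. Qed.
Lemma lm_rm s t x : lm s (rm t x) = rm t (lm s x).
Proof. by case: s; case: t => //= *; rewrite A. Qed.

Lemma leR_refl x : leR x x. Proof. by apply/existsP; exists None. Qed.
Lemma leL_refl x : leL x x. Proof. by apply/existsP; exists None. Qed.
Lemma leJ_refl x : leJ x x. Proof. by apply/existsP; exists None; apply/existsP; exists None. Qed.
Lemma leR_trans x y w : leR x y -> leR y w -> leR x w.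
Proof. by move=> /existsP[t /eqP->] /existsP[t' /eqP->]; apply/existsP; exists (omul t' t); rewrite rm_rm. Qed.
Lemma leL_trans x y w : leL x y -> leL y w -> leL x w.
Proof. by move=> /existsP[t /eqP->] /existsP[t' /eqP->]; apply/existsP; exists (omul t t'); rewrite lm_lm. Qed.
Lemma leJ_trans x y w : leJ x y -> leJ y w -> leJ x w.
Proof.
move=> /existsP[s /existsP[t /eqP->]] /existsP[s' /existsP[t' /eqP->]].
apply/existsP; exists (omul s s'); apply/existsP; exists (omul t' t).
by rewrite lm_rm rm_rm lm_lm.
Qed.
Lemma leR_op x y : leR (op x y) x. Proof. by apply/existsP; exists (Some y). Qed.
Lemma leL_op x y : leL (op y x) x. Proof. by apply/existsP; exists (Some y). Qed.
Lemma leJ_R x y : leR x y -> leJ x y.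
Proof. by move=> /existsP[t /eqP->]; apply/existsP; exists None; apply/existsP; exists t. Qed.
Lemma leJ_L x y : leL x y -> leJ x y.
Proof. by move=> /existsP[t /eqP->]; apply/existsP; exists t; apply/existsP; exists None. Qed.

Lemma eqR_refl x : eqR x x. Proof. by rewrite /eqR leR_refl. Qed.
Lemma eqL_refl x : eqL x x. Proof. by rewrite /eqL leL_refl. Qed.
Lemma eqJ_refl x : eqJ x x. Proof. by rewrite /eqJ leJ_refl. Qed.
Lemma eqH_refl x : eqH x x. Proof. by rewrite /eqH eqR_refl eqL_refl. Qed.
Lemma eqR_sym x y : eqR x y = eqR y x. Proof. by rewrite /eqR andbC. Qed.
Lemma eqL_sym x y : eqL x y = eqL y x. Proof. by rewrite /eqL andbC. Qed.
Lemma eqJ_sym x y : eqJ x y = eqJ y x. Proof. by rewrite /eqJ andbC. Qed.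
Lemma eqH_sym x y : eqH x y = eqH y x. Proof. by rewrite /eqH eqR_sym eqL_sym. Qed.
Lemma eqR_trans x y w : eqR x y -> eqR y w -> eqR x w.
Proof. by move=> /andP[a b] /andP[c d]; apply/andP; split; [apply: leR_trans a c|apply: leR_trans d b]. Qed.
Lemma eqL_trans x y w : eqL x y -> eqL y w -> eqL x w.
Proof. by move=> /andP[a b] /andP[c d]; apply/andP; split; [apply: leL_trans a c|apply: leL_trans d b]. Qed.
Lemma eqJ_trans x y w : eqJ x y -> eqJ y w -> eqJ x w.
Proof. by move=> /andP[a b] /andP[c d]; apply/andP; split; [apply: leJ_trans a c|apply: leJ_trans d b]. Qed.
Lemma eqH_trans x y w : eqH x y -> eqH y w -> eqH x w.
Proof. by move=> /andP[a b] /andP[c d]; apply/andP; split; [apply: eqR_trans a c|apply: eqL_trans b d]. Qed.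

Lemma inv_sym a b : sinv a b = sinv b a. Proof. by rewrite /sinv andbC. Qed.
Lemma inv_eqJ a b : sinv a b -> eqJ a b.
Proof.
move=> /andP[/eqP h1 /eqP h2]; apply/andP; split; apply/existsP.
  by exists (Some a); apply/existsP; exists (Some a); rewrite /= h1.
by exists (Some b); apply/existsP; exists (Some b); rewrite /= h2.
Qed.

Lemma pwS a n : pw a n.+1 = op a (pw a n). Proof. by []. Qed.
Lemma pw_add a m n : pw a (m + n).+1 = op (pw a m) (pw a n).
Proof. elim: m => [|m IH]; first by rewrite add0n. by rewrite addSn pwS IH pwS A. Qed.
Lemma pwSr a n : pw a n.+1 = op (pw a n) a.
Proof. by rewrite -[n in LHS]addn0 pw_add. Qed.

Lemma pw_idem a : exists m, op (pw a m) (pw a m) = pw a m.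
Proof.
have: ~~ injectiveb (fun i : 'I_(#|T|.+1) => pw a i).
  apply/negP => /injectiveP inj; have := leq_card _ inj.
  by rewrite card_ord ltnn.
case/injectivePn => i [j] neq eq.
wlog lt : i j neq eq / (i < j)%N.
  move=> H; case: (ltngtP i j) => h; first exact: (H i j).
    by apply: (H j i) => //; rewrite eq_sym.
  by move: neq; rewrite -val_eqE /= h eqxx.
set p := (j - i)%N.
have per k : pw a (i + k) = pw a (j + k).
  elim: k => [|k IH]; first by rewrite !addn0.
  by rewrite !addnS !pwS IH.
have mult q k : pw a (i + k + q * p) = pw a (i + k).
  elim: q => [|q IH]; first by rewrite mul0n addn0.
  have -> : (i + k + q.+1 * p = j + (k + q * p))%N by rewrite mulSn /p; lia.
  by rewrite -per addnA IH.
set K := (i.+1 * p)%N.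
have hK : (i.+1 <= K)%N by rewrite /K leq_pmulr // subn_gt0.
exists K.-1.
rewrite -pw_add.
have -> : (K.-1 + K.-1).+1 = i + (K.-1 - i) + i.+1 * p by rewrite -/K; lia.
by rewrite mult; congr pw; lia.
Qed.

Lemma idem_left e x w : op e e = e -> x = op e w -> op e x = x.
Proof. by move=> He ->; rewrite A He. Qed.

Lemma stabR x y : leJ x (op x y) -> exists u, x = op (op x y) u.
Proof.
move=> /existsP[s /existsP[t /eqP Hx]].
set c := rm t y.
have fin w : x = op (op x c) w -> exists u, x = op (op x y) u.
  rewrite /c; case: t {Hx c} => [t0|] /= H; last by exists w.
  by exists (op t0 w); rewrite {1}H !A.
have Hc : x = lm s (op x c).
  by rewrite {1}Hx /c; case: s {Hx}; case: t {c fin} => //= *; rewrite !A.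
case: s Hc {Hx} => [s0|] /= Hc; last by apply: (fin c); rewrite -!Hc.
have Hn n : x = op (pw s0 n) (op x (pw c n)).
  elim: n => [|n IH] //.
  by rewrite {1}IH {1}Hc pwSr pwS !A.
have [m Hm] := pw_idem c.
have Hxg : op x (pw c m) = x.
  by rewrite {1}(Hn m) -!A Hm -(Hn m).
apply: (fin (pw c (m + m))).
by rewrite -A -pwS pw_add Hm Hxg.
Qed.

Lemma ridem x u m : x = op (op x x) u -> op (pw x m) (pw x m) = pw x m ->
  op (pw x m) x = x.
Proof.
move=> H Hm.
have H' : x = op x (op x u) by rewrite A.
have Hn n : x = op (pw x n) (op x (pw u n)).
  elim: n => [|n IH] //.
  by rewrite {1}H' {2}IH pwS pwSr !A.
by apply: idem_left Hm (Hn m).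
Qed.

End Basic.

Definition fl (T : Type) (op : T -> T -> T) := fun a b => op b a.

Section Flip.
Variables (T : finType) (op : T -> T -> T).
Hypothesis A : associative op.

Lemma A_flip : associative (fl op).
Proof. by move=> x y w; rewrite /fl A. Qed.
Lemma leR_flip x y : leR (fl op) x y = leL op x y. Proof. by []. Qed.
Lemma leL_flip x y : leL (fl op) x y = leR op x y. Proof. by []. Qed.
Lemma eqR_flip x y : eqR (fl op) x y = eqL op x y. Proof. by []. Qed.
Lemma eqL_flip x y : eqL (fl op) x y = eqR op x y. Proof. by []. Qed.
Lemma eqH_flip x y : eqH (fl op) x y = eqH op x y. Proof. by rewrite /eqH andbC. Qed.
Lemma leJ_flip x y : leJ (fl op) x y = leJ op x y.
Proof.
apply/idP/idP => /existsP[s /existsP[t /eqP->]]; apply/existsP; exists t;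
  apply/existsP; exists s; apply/eqP; by case: s; case: t => //= *; rewrite /fl A.
Qed.
Lemma eqJ_flip x y : eqJ (fl op) x y = eqJ op x y.
Proof. by rewrite /eqJ !leJ_flip. Qed.
Lemma pw_flip x n : pw (fl op) x n = pw op x n.
Proof. by elim: n => [|n IH] //; rewrite pwS IH pwSr. Qed.
Lemma inv_flip a b : sinv (fl op) a b = sinv op a b.
Proof. by rewrite /sinv /fl !A. Qed.

Lemma stabL x y : leJ op x (op y x) -> exists u, x = op u (op y x).
Proof. rewrite -leJ_flip => h; exact: (stabR A_flip h). Qed.

Lemma lidem x u m : x = op u (op x x) -> op (pw op x m) (pw op x m) = pw op x m ->
  op x (pw op x m) = x.
Proof.
move=> H Hm.
have := @ridem _ (fl op) A_flip x u m; rewrite /fl !pw_flip; apply => //.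
Qed.

Definition ginv x := odflt x [pick b | sinv op x b && (op x b == op b x)].

Lemma ginv_unique x b b' : sinv op x b -> op x b = op b x -> sinv op x b' -> op x b' = op b' x -> b = b'.
Proof.
move=> /andP[/eqP h1 /eqP h2] c /andP[/eqP h1' /eqP h2'] c'.
have E2 : op (op b x) (op b' x) = op b x by rewrite -A [op x (op b' x)]A h1'.
have E1 : op (op x b) (op x b') = op x b' by rewrite A h1.
have E : op x b = op x b' by rewrite c -E2 -c -c' E1.
transitivity (op b (op x b)); first by rewrite A h2.
by rewrite E A -c E c' h2'.
Qed.

Lemma ginv_ex x : leJ op x (op x x) -> exists b, sinv op x b && (op x b == op b x).
Proof.
move=> h.
have [u Hu] := stabR A h.
have [u' Hu'] := stabL h.
have [m Hm] := pw_idem A x.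
have e1 := ridem A Hu Hm.
have e2 := lidem Hu' Hm.
exists (pw op x (m + m)).
have xb : op x (pw op x (m + m)) = pw op x m by rewrite -pwS (pw_add A) Hm.
have bx : op (pw op x (m + m)) x = pw op x m by rewrite -(pwSr A) (pw_add A) Hm.
have eb n : op (pw op x m) (pw op x n) = pw op x n.
  elim: n => [|n IH] //; by rewrite pwS A e1.
by rewrite /sinv xb bx e1 eb !eqxx.
Qed.

Lemma ginv_spec x : leJ op x (op x x) ->
  sinv op x (ginv x) /\ op x (ginv x) = op (ginv x) x.
Proof.
move=> /ginv_ex [b Hb]; rewrite /ginv; case: pickP => [c /andP[h1 /eqP h2]|H] //=.
by rewrite H in Hb.
Qed.

Lemma ginv_inv x : leJ op x (op x x) -> ginv (ginv x) = x.
Proof.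
move=> /ginv_spec [h1 h2].
rewrite {1}/ginv; case: pickP => [c /andP[h3 /eqP h4]|H] /=.
  symmetry; apply: (ginv_unique (x := ginv x)) => //.
  by rewrite inv_sym.
have := H x; by rewrite inv_sym h1 h2 eqxx.
Qed.

Definition Jcls a := [set b | eqJ op a b].
Lemma inJ a b : (b \in Jcls a) = eqJ op a b. Proof. by rewrite inE. Qed.
Definition hasInvC (C : {set T}) :=
  [exists f : {ffun T -> T}, [forall a in C, [&& f a \in C, sinv op a (f a) & f (f a) == a]]].

Lemma Jcls_eq a b : eqJ op a b -> Jcls a = Jcls b.
Proof.
move=> H; apply/setP => x; rewrite !inJ; apply/idP/idP => h.
  by apply: (eqJ_trans A _ h); rewrite eqJ_sym.
exact: (eqJ_trans A H h).
Qed.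

Lemma hasInvC_sq a0 : (forall a, a \in Jcls a0 -> op a a \in Jcls a0) -> hasInvC (Jcls a0).
Proof.
move=> H; apply/existsP; exists [ffun a => ginv a]; apply/forallP => a; apply/implyP => Ha.
have hJ : leJ op a (op a a).
  have := H a Ha; rewrite !inJ => h2; move: Ha; rewrite inJ eqJ_sym => h1.
  by case/andP: (eqJ_trans A h1 h2).
have [s1 s2] := ginv_spec hJ.
rewrite !ffunE ginv_inv // s1 eqxx andbT.
move: Ha; rewrite !inJ andbT => h; apply: (eqJ_trans A h); exact: inv_eqJ.
Qed.

Lemma sinvP a b : sinv op a b -> inverse_of op a b.
Proof. by case/andP => /eqP ? /eqP ?. Qed.

Definition Fs (C : {set T}) :=
  [pick f : {ffun T -> T} | [forall x in C, [&& f x \in C, sinv op x (f x) & f (f x) == x]]].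

Lemma glue : (forall a, hasInvC (Jcls a)) -> has_involution_matching op.
Proof.
move=> H.
pose psi a := if Fs (Jcls a) is Some f then f a else a.
have key a : sinv op a (psi a) /\ psi (psi a) = a.
  have [g Eg Pg] : exists2 g, Fs (Jcls a) = Some g &
     [forall x in Jcls a, [&& g x \in Jcls a, sinv op x (g x) & g (g x) == x]].
    rewrite /Fs; case: pickP => [g Pg|Hn]; first by exists g.
    by have /existsP[g Pg] := H a; rewrite Hn in Pg.
  have /forallP /(_ a) := Pg; rewrite inJ eqJ_refl /= => /and3P[h1 h2 /eqP h3].
  have EJ : Jcls (g a) = Jcls a by apply/esym/Jcls_eq; move: h1; rewrite inJ.
  by rewrite /psi Eg /= EJ Eg h3.
exists psi; split; last by move=> a; case: (key a).
split; first by apply: inv_bij => a; case: (key a).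
by move=> a; apply: sinvP; case: (key a).
Qed.
End Flip.

Section J0sec.
Variables (T : finType) (op : T -> T -> T).
Hypothesis A : associative op.
Variable J : {set T}.
Hypothesis Hsand : forall x y w, x \in J -> w \in J -> leJ op w y -> leJ op y x -> y \in J.

Definition J0 := option {x : T | x \in J}.
Definition op0 (a b : J0) : J0 :=
  match a, b with Some x, Some y => insub (op (val x) (val y)) | _, _ => None end.

Lemma insub_Some (w : T) (u : {x : T | x \in J}) : insub w = Some u -> w = val u.
Proof. by case: insubP => [u' _ <- [->]|_]. Qed.

Lemma insub_in (w : T) : w \in J -> exists u : {x : T | x \in J}, insub w = Some u /\ val u = w.
Proof. by case: insubP => [u _ Eu|/negP//] _; exists u. Qed.

Lemma op0Nr a : op0 a None = None. Proof. by case: a. Qed.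

Lemma op0_l (x y z : {x : T | x \in J}) :
  op0 (op0 (Some x) (Some y)) (Some z) = insub (op (op (val x) (val y)) (val z)).
Proof.
rewrite /=; case: insubP => [w _ Ew|nJ] /=; first by rewrite Ew.
symmetry; apply: insubN; apply/negP => h; apply: (negP nJ).
apply: (Hsand (valP x) h); [exact: leJ_R (leR_op _ _ _) | exact: leJ_R (leR_op _ _ _)].
Qed.

Lemma op0_r (x y z : {x : T | x \in J}) :
  op0 (Some x) (op0 (Some y) (Some z)) = insub (op (val x) (op (val y) (val z))).
Proof.
rewrite /=; case: insubP => [w _ Ew|nJ] /=; first by rewrite Ew.
symmetry; apply: insubN; apply/negP => h; apply: (negP nJ).
apply: (Hsand (valP y) h); [exact: leJ_L (leL_op _ _ _) | exact: leJ_R (leR_op _ _ _)].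
Qed.

Lemma op0_assoc : associative op0.
Proof.
move=> [x|] [y|] [z|]; rewrite ?op0_l ?op0_r ?A ?op0Nr //.
Qed.

Lemma card_J0 : #|{: J0}| = #|J|.+1.
Proof. by rewrite card_option card_sig. Qed.

Variable phi : T -> T.
Hypothesis Hphi : permutation_matching op phi.
Hypothesis HJphi : forall x, (phi x \in J) = (x \in J).

Definition phi0 (a : J0) : J0 := if a is Some x then insub (phi (val x)) else None.

Lemma phi0_pm : permutation_matching op0 phi0.
Proof.
case: Hphi => [[g c1 c2] Hinv].
have HJg y : (g y \in J) = (y \in J) by rewrite -HJphi c2.
split.
  exists (fun a : J0 => if a is Some y then insub (g (val y)) else None).
    move=> [x|] //=.
    have hx : phi (val x) \in J by rewrite HJphi (valP x).
    have [w [-> Ew]] := insub_in hx.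
    by rewrite /= Ew c1 valK.
  move=> [y|] //=.
  have hy : g (val y) \in J by rewrite HJg (valP y).
  have [w [-> Ew]] := insub_in hy.
  by rewrite /= Ew c2 valK.
move=> [x|] //=.
have hx : phi (val x) \in J by rewrite HJphi (valP x).
have [w [Ew vw]] := insub_in hx.
rewrite Ew; have [h1 h2] := Hinv (val x).
by split; rewrite op0_l vw ?h1 ?h2 -?vw valK.
Qed.

Lemma J0_noinv : ~~ hasInvC op J -> ~ has_involution_matching op0.
Proof.
move=> nH [psi [[_ Hi] Hii]]; apply: (negP nH).
apply/existsP.
exists [ffun a => if insub a is Some x then (if psi (Some x) is Some y then val y else a) else a].
apply/forallP => a; apply/implyP => Ha.
have [x [Ex vx]] := insub_in Ha.
rewrite !ffunE Ex.
case Ep : (psi (Some x)) => [y|]; last first.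
  by have [h1 _] := Hi (Some x); rewrite Ep op0Nr in h1.
rewrite valK -Ep Hii /= vx (valP y) /=.
have [h1 h2] := Hi (Some x); rewrite Ep !op0_l in h1 h2.
rewrite eqxx andbT -vx; apply/andP; split; apply/eqP; [exact: (insub_Some h1) | exact: (insub_Some h2)].
Qed.

End J0sec.

Section Hall.
Variables (X Y : finType) (Af : X -> {set Y}) (y0 : Y).
Definition Nb (P : {set X}) := \bigcup_(x in P) Af x.

Lemma Nb_sub (P : {set X}) x : x \in P -> Af x \subset Nb P.
Proof. by move=> h; apply: (bigcup_max x). Qed.

Lemma hall_gen n : forall (D : {set X}) (R : {set Y}), #|D| <= n ->
  (forall P : {set X}, P \subset D -> #|P| <= #|Nb P :&: R|) ->
  exists f : X -> Y, {in D &, injective f} /\ {in D, forall x, f x \in Af x :&: R}.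
Proof.
elim: n => [|n IH] D R hD HP.
  have D0 : D = set0 by apply/eqP; rewrite -cards_eq0; lia.
  by exists (fun _ => y0); split => x; rewrite D0 inE.
case: (leqP #|D| n) => hDn; first exact: IH.
case: (boolP [exists P0 : {set X}, [&& P0 \proper D, P0 != set0 & #|Nb P0 :&: R| <= #|P0|]]).
  case/existsP => P0 /and3P[pP0 nP0 tP0].
  have sP0 := proper_sub pP0.
  have cP0 : #|P0| <= n by have := proper_card pP0; lia.
  have [f1 [i1 m1]] := IH P0 R cP0 (fun P sP => HP P (subset_trans sP sP0)).
  pose D' := D :\: P0; pose R' := R :\: Nb P0.
  have cD' : #|D'| <= n.
    rewrite /D' cardsDS //; have : 0 < #|P0| by rewrite card_gt0.
    lia.
  have HP' : forall P : {set X}, P \subset D' -> #|P| <= #|Nb P :&: R'|.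
    move=> P sP.
    have sPD : P \subset D by apply: subset_trans sP _; apply: subsetDl.
    have dP : [disjoint P & P0].
      rewrite -setI_eq0; apply/eqP/setP => x; rewrite !inE.
      apply/negP => /andP[xP xP0]; have := subsetP sP x xP; by rewrite inE xP0.
    have sU : P :|: P0 \subset D by rewrite subUset sPD sP0.
    have := HP (P :|: P0) sU.
    rewrite cardsU (disjoint_setI0 dP) cards0 subn0.
    have E : Nb (P :|: P0) :&: R \subset (Nb P :&: R') :|: (Nb P0 :&: R).
      apply/subsetP => y; rewrite /Nb bigcup_setU !inE.
      by case: (y \in \bigcup_(x in P0) Af x); case: (y \in \bigcup_(x in P) Af x); case: (y \in R).
    have := subset_leq_card E; have := (leq_card_setU (Nb P :&: R') (Nb P0 :&: R)).1.
    lia.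
  have [f2 [i2 m2]] := IH D' R' cD' HP'.
  exists (fun x => if x \in P0 then f1 x else f2 x); split; last first.
    move=> x xD; case: ifP => xP0; first exact: m1.
    have xD' : x \in D' by rewrite inE xP0 xD.
    have := m2 x xD'; rewrite !inE; by case/andP => -> /andP[_ ->].
  have nb x y : x \in P0 -> y \in D' -> f1 x != f2 y.
    move=> xP yD; have := m1 x xP; rewrite inE => /andP[h1 _].
    have := m2 y yD; rewrite !inE => /andP[_ /andP[h2 _]].
    apply/eqP => E; move: h2; rewrite -E; apply/negP/negPn.
    exact: (subsetP (Nb_sub xP)).
  move=> x y xD yD /=; case: ifP => xP; case: ifP => yP.
  - exact: i1.
  - move=> E; have yD' : y \in D' by rewrite inE yP yD.
    by have := nb _ _ xP yD'; rewrite E eqxx.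
  - move=> E; have xD' : x \in D' by rewrite inE xP xD.
    by have := nb _ _ yP xD'; rewrite E eqxx.
  - by apply: i2; rewrite inE ?xP ?yP.
rewrite negb_exists => /forallP Hn.
have : 0 < #|D| by lia.
rewrite card_gt0 => /set0Pn [x0 x0D].
have : 0 < #|Nb [set x0] :&: R|.
  by have := HP [set x0]; rewrite sub1set x0D cards1; apply.
rewrite card_gt0 => /set0Pn [y1]; rewrite /Nb big_set1 => y1A.
pose D' := D :\ x0; pose R' := R :\ y1.
have cD' : #|D'| <= n by have := cardsD1 x0 D; rewrite x0D /D'; lia.
have HP' : forall P : {set X}, P \subset D' -> #|P| <= #|Nb P :&: R'|.
  move=> P sP; case: (P =P set0) => [->|/eqP nP]; first by rewrite cards0.
  have pP : P \proper D.
    rewrite properEneq; apply/andP; split.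
      apply/eqP => E; move: sP; rewrite E => /subsetP /(_ x0 x0D); by rewrite !inE eqxx.
    by apply: subset_trans sP _; apply: subD1set.
  have := Hn P; rewrite pP nP /= -ltnNge => h.
  have E : Nb P :&: R \subset (Nb P :&: R') :|: [set y1].
    apply/subsetP => y; rewrite !inE; by case: (y == y1); case: (y \in Nb P); case: (y \in R).
  have := subset_leq_card E; have := (leq_card_setU (Nb P :&: R') [set y1]).1; rewrite cards1.
  lia.
have [f2 [i2 m2]] := IH D' R' cD' HP'.
exists (fun x => if x == x0 then y1 else f2 x); split; last first.
  move=> x xD; case: ifP => [/eqP->|nx] //.
  have xD' : x \in D' by rewrite /D' !inE nx xD.
  have := m2 x xD'; rewrite !inE; by case/andP => -> /andP[_ ->].
have nb y : y \in D' -> y1 != f2 y.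
  move=> yD; have := m2 y yD; rewrite !inE => /andP[_ /andP[h _]]; by rewrite eq_sym.
move=> x y xD yD /=; case: ifP => [/eqP->|nx]; case: ifP => [/eqP->|ny] //.
- move=> E; have yD' : y \in D' by rewrite /D' !inE ny yD.
  by have := nb _ yD'; rewrite E eqxx.
- move=> E; have xD' : x \in D' by rewrite /D' !inE nx xD.
  by have := nb _ xD'; rewrite E eqxx.
- by apply: i2; rewrite /D' !inE ?nx ?ny.
Qed.

Lemma hall : (forall P : {set X}, #|P| <= #|Nb P|) ->
  exists f : X -> Y, injective f /\ forall x, f x \in Af x.
Proof.
move=> H.
have HP : forall P : {set X}, P \subset setT -> #|P| <= #|Nb P :&: setT|.
  by move=> P _; rewrite setIT.
have [f [i m]] := @hall_gen #|X| setT setT (max_card _) HP.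
exists f; split.
  by move=> x y; apply: i; rewrite inE.
by move=> x; have := m x; rewrite !inE andbT; apply.
Qed.
End Hall.

Section Idem.
Variables (T : finType) (op : T -> T -> T).
Hypothesis A : associative op.

Lemma leR_idem a e : leR op a e -> op e e = e -> op e a = a.
Proof. by move=> /existsP[t /eqP->] He; case: t => //= t; rewrite A He. Qed.
Lemma leL_idem a e : leL op a e -> op e e = e -> op a e = a.
Proof. by move=> /existsP[t /eqP->] He; case: t => //= t; rewrite -A He. Qed.

Lemma idem_H e f : op e e = e -> op f f = f -> eqH op e f -> e = f.
Proof.
move=> He Hf /andP[/andP[r1 r2] /andP[l1 l2]].
have e2 := leL_idem l1 Hf.
by rewrite -[LHS]e2; exact: leR_idem r2 He.
Qed.

Lemma UN a b b' : sinv op a b -> sinv op a b' -> eqH op b b' -> b = b'.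
Proof.
move=> /andP[/eqP h1 /eqP h2] /andP[/eqP h1' /eqP h2'] /andP[/andP[r1 r2] /andP[l1 l2]].
have i1 : op (op a b) (op a b) = op a b by rewrite A h1.
have i2 : op (op a b') (op a b') = op a b' by rewrite A h1'.
have j1 : op (op b a) (op b a) = op b a by rewrite A h2.
have j2 : op (op b' a) (op b' a) = op b' a by rewrite A h2'.
have Re x y : op (op x y) x = x -> eqR op (op x y) x.
  move=> h; rewrite /eqR leR_op; apply/existsP; exists (Some x); by rewrite /= h.
have Le x y : op (op y x) y = y -> eqL op (op x y) y.
  move=> h; rewrite /eqL leL_op; apply/existsP; exists (Some y); by rewrite /= A h.
have E1 : op a b = op a b'.
  apply: idem_H i1 i2 _; apply/andP; split.
    by apply: (eqR_trans A (Re _ _ h1)); rewrite eqR_sym; apply: Re.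
  apply: (eqL_trans A (Le _ _ h2)); apply: (eqL_trans A _ ); last by rewrite eqL_sym; apply: Le.
  by rewrite /eqL l1 l2.
have E2 : op b a = op b' a.
  apply: idem_H j1 j2 _; apply/andP; split; last first.
    have Le' x y : op (op x y) x = x -> eqL op (op y x) x.
      move=> h; rewrite /eqL leL_op; apply/existsP; exists (Some x); by rewrite /= A h.
    by apply: (eqL_trans A (Le' _ _ h1)); rewrite eqL_sym; apply: Le'.
  have Re' x y : op (op y x) y = y -> eqR op (op y x) y.
    move=> h; rewrite /eqR leR_op; apply/existsP; exists (Some y); by rewrite /= h.
  apply: (eqR_trans A (Re' _ _ h2)); apply: (eqR_trans A _ ); last by rewrite eqR_sym; apply: Re'.
  by rewrite /eqR r1 r2.
by rewrite -h2 -A E1 A E2 h2'.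
Qed.
End Idem.

Section Green.
Variables (T : finType) (op : T -> T -> T).
Hypothesis A : associative op.
Definition Hs x := #|[set a | eqH op a x]|.

Lemma greenR_le x w : eqR op x w -> Hs x <= Hs w.
Proof.
move=> /andP[/existsP[t' /eqP xw] /existsP[t /eqP wx]].
pose f a := rm op t a.
have Hin a : eqH op a x -> rm op t' (f a) = a /\ eqH op (f a) w.
  case/andP => /andP[ra1 ra2] /andP[/existsP[s /eqP asx] /existsP[s' /eqP xsa]].
  have back : rm op t' (f a) = a.
    by rewrite /f asx -!(lm_rm A) -wx -xw.
  split => //; apply/andP; split.
    apply: (eqR_trans A (_ : eqR op (f a) a)).
      by rewrite /eqR; apply/andP; split; apply/existsP; [exists t|exists t'; rewrite back].
    apply: (eqR_trans A (_ : eqR op a x)); first by rewrite /eqR ra1 ra2.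
    by rewrite /eqR; apply/andP; split; apply/existsP; [exists t'|exists t]; apply/eqP.
  apply/andP; split; apply/existsP.
    by exists s; rewrite /f asx -(lm_rm A) -wx.
  by exists s'; rewrite /f wx xsa (lm_rm A).
have sub : [set f a | a in [set a | eqH op a x]] \subset [set a | eqH op a w].
  apply/subsetP => _ /imsetP[a ha ->]; rewrite inE; move: ha; rewrite inE => ha.
  exact: (Hin a ha).2.
apply: leq_trans (subset_leq_card sub).
rewrite card_in_imset // => a b; rewrite !inE => ha hb E.
by rewrite -[a](Hin a ha).1 -[b](Hin b hb).1 E.
Qed.

Lemma greenR_eq x w : eqR op x w -> Hs x = Hs w.
Proof. by move=> h; apply/anti_leq; rewrite !greenR_le // eqR_sym. Qed.
End Green.

Lemma Hs_flip (T : finType) (op : T -> T -> T) x : Hs (fl op) x = Hs op x.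
Proof. by rewrite /Hs; apply: eq_card => a; rewrite !inE eqH_flip. Qed.

Lemma greenL_eq (T : finType) (op : T -> T -> T) (A : associative op) x w :
  eqL op x w -> Hs op x = Hs op w.
Proof. by move=> h; rewrite -(Hs_flip op x) -(Hs_flip op w); apply: (greenR_eq (A_flip A)). Qed.

Section ZeroSec.
Variables (T : finType) (op : T -> T -> T).
Hypothesis A : associative op.
Variable z : T.
Hypothesis Hz : forall x, op z x = z /\ op x z = z.
Hypothesis Hj : forall x y, x != z -> y != z -> eqJ op x y.

Lemma opzl x : op z x = z. Proof. by case: (Hz x). Qed.
Lemma opzr x : op x z = z. Proof. by case: (Hz x). Qed.
Lemma lmz s : lm op s z = z. Proof. by case: s => //= s; rewrite opzr. Qed.
Lemma rmz t : rm op t z = z. Proof. by case: t => //= t; rewrite opzl. Qed.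

Lemma nzl a b : op a b != z -> a != z.
Proof. by apply: contra => /eqP->; rewrite opzl. Qed.
Lemma nzr a b : op a b != z -> b != z.
Proof. by apply: contra => /eqP->; rewrite opzr. Qed.

Lemma G1R a b : op a b != z -> eqR op (op a b) a.
Proof.
move=> h; have /andP[h1 _] := Hj (nzl h) h.
have [u Hu] := stabR A h1.
by rewrite /eqR leR_op; apply/existsP; exists (Some u); rewrite /= -Hu.
Qed.
Lemma G1L a b : op a b != z -> eqL op (op a b) b.
Proof.
move=> h; have /andP[h1 _] := Hj (nzr h) h.
have [u Hu] := stabL A h1.
by rewrite /eqL leL_op; apply/existsP; exists (Some u); rewrite /= -Hu.
Qed.

Lemma G2L a a' b : leL op a a' -> op a b != z -> op a' b != z.
Proof.
move=> /existsP[s /eqP->]; apply: contra => /eqP E.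
by case: s => [s|] /=; rewrite ?E // -A E opzr.
Qed.
Lemma G2R b b' a : leR op b b' -> op a b != z -> op a b' != z.
Proof.
move=> /existsP[s /eqP->]; apply: contra => /eqP E.
by case: s => [s|] /=; rewrite ?E // A E opzl.
Qed.

Lemma eqHz y : eqH op z y -> y = z.
Proof. by case/andP=> /andP[_ /existsP[t /eqP->]] _; rewrite rmz. Qed.

Lemma cong a a' b b' : eqH op a a' -> eqH op b b' -> eqH op (op a b) (op a' b').
Proof.
move=> Ha Hb.
have Ha' := Ha; have Hb' := Hb.
move: Ha' Hb' => /andP[/andP[ra1 ra2] /andP[la1 la2]] /andP[/andP[rb1 rb2] /andP[lb1 lb2]].
case: (op a b =P z) => [E|/eqP nE].
  suff -> : op a' b' = z by rewrite E eqH_refl.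
  apply/eqP; apply/negPn/negP => h.
  by move: (G2R rb2 (G2L la2 h)); rewrite E eqxx.
have n1 : op a' b != z := G2L la1 nE.
have n2 : op a' b' != z := G2R rb1 n1.
apply/andP; split.
  apply: (eqR_trans A (G1R nE)); apply: (eqR_trans A (_ : eqR op a a')); first by rewrite /eqR ra1 ra2.
  by rewrite eqR_sym; apply: G1R.
have n3 : op a b' != z := G2R rb1 nE.
apply: (eqL_trans A (G1L nE)); apply: (eqL_trans A (_ : eqL op b b')); first by rewrite /eqL lb1 lb2.
by rewrite eqL_sym; apply: G1L.
Qed.

Definition rep x := odflt x [pick y | eqH op x y].
Lemma eqH_rep x : eqH op x (rep x).
Proof. by rewrite /rep; case: pickP => [y ->|H] //=; rewrite eqH_refl. Qed.
Lemma rep_eqH x y : eqH op x y -> rep x = rep y.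
Proof.
move=> H; rewrite /rep; have -> : [pick w | eqH op x w] = [pick w | eqH op y w].
  apply: eq_pick => w; apply/idP/idP => h.
    by apply: (eqH_trans A _ h); rewrite eqH_sym.
  exact: (eqH_trans A H h).
case: pickP => //= Hn; have := eqH_rep y; rewrite /rep.
by case: pickP => [w|] //=; rewrite Hn.
Qed.
Lemma rep_eq x y : (rep x = rep y) <-> eqH op x y.
Proof.
split; last exact: rep_eqH.
move=> E; apply: (eqH_trans A (eqH_rep x)); rewrite E eqH_sym; exact: eqH_rep.
Qed.
Lemma rep_repb x : rep (rep x) == rep x.
Proof. by apply/eqP/esym/rep_eqH/eqH_rep. Qed.
Lemma rep_z : rep z = z.
Proof. by apply: eqHz; exact: eqH_rep. Qed.

Definition B := {x : T | rep x == x}.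
Definition qB x : B := exist _ (rep x) (rep_repb x).
Definition opB (u v : B) : B := qB (op (val u) (val v)).

Lemma qB_val u : qB (val u) = u.
Proof. by apply: val_inj; rewrite /= (eqP (valP u)). Qed.
Lemma qB_eq x y : qB x = qB y <-> eqH op x y.
Proof.
split; first by move=> /(congr1 val) /= /rep_eq.
by move=> /rep_eq E; apply: val_inj.
Qed.
Lemma qB_rep x : qB (rep x) = qB x.
Proof. by apply/qB_eq; rewrite eqH_sym; exact: eqH_rep. Qed.
Lemma qB_opl x y : qB (op (rep x) y) = qB (op x y).
Proof. by apply/qB_eq; apply: cong; [rewrite eqH_sym; exact: eqH_rep | exact: eqH_refl]. Qed.
Lemma qB_opr x y : qB (op x (rep y)) = qB (op x y).
Proof. by apply/qB_eq; apply: cong; [exact: eqH_refl | rewrite eqH_sym; exact: eqH_rep]. Qed.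

Lemma opB_assoc : associative opB.
Proof. by move=> u v w; rewrite /opB /= qB_opl qB_opr A. Qed.

Lemma invB u v : inverse_of opB u v <->
  (eqH op (op (op (val u) (val v)) (val u)) (val u) /\
   eqH op (op (op (val v) (val u)) (val v)) (val v)).
Proof.
rewrite /inverse_of /opB /= !qB_opl.
split.
  by case=> h1 h2; split; apply/qB_eq; rewrite qB_val.
by case=> /qB_eq h1 /qB_eq h2; rewrite qB_val in h1; rewrite qB_val in h2.
Qed.

Lemma EX a v : eqH op (op (op a v) a) a -> eqH op (op (op v a) v) v ->
  exists b, sinv op a b && eqH op b v.
Proof.
move=> h1 h2.
case: (a =P z) => [Ea|/eqP na].
  move: h2; rewrite Ea opzr opzl => /eqHz ->; exists z.
  by rewrite /sinv !opzl eqxx eqH_refl.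
have aza : op (op a v) a != z.
  apply: contra na => /eqP E; rewrite E in h1; apply/eqP; exact: eqHz.
set x := op a v.
have xz : x != z := nzl aza.
have xx : eqH op (op x x) x by rewrite /x A; exact: cong h1 (eqH_refl op v).
have xxz : op x x != z.
  apply: contra xz => /eqP E; rewrite E in xx; apply/eqP; exact: eqHz.
have hJ : leJ op x (op x x) by case/andP: (Hj xz xxz).
have [s1 s2] := ginv_spec A hJ.
set y := ginv op x in s1 s2.
have s1' := s1; move/andP: s1' => [/eqP xyx /eqP yxy].
have ez : op x y != z by apply: contra xz => /eqP E; rewrite -xyx E opzl.
have ez' : op y x != z by rewrite -s2.
have eid : op (op x y) (op x y) = op x y by rewrite A xyx.
have ea : op (op x y) a = a.
  apply: (leR_idem A _ eid).
  by case/andP: (eqR_trans A (G1R ez) (G1R xz : eqR op x a)).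
have ve : op v (op x y) = v.
  apply: (leL_idem A _ eid).
  have e1 : eqL op (op x y) x by rewrite s2; exact: G1L ez'.
  by case/andP: (eqL_trans A e1 (G1L xz : eqL op x v)).
exists (op v y).
have Hb1 : op (op a (op v y)) a = a by rewrite A -/x ea.
have Hb2 : op (op (op v y) a) (op v y) = op v y.
  by rewrite -!A [op a (op v y)]A -/x [op y (op x y)]A yxy.
have bz : op v y != z.
  apply: contra na => /eqP E; apply/eqP; by rewrite -Hb1 E opzr opzl.
rewrite /sinv Hb1 Hb2 !eqxx /=.
apply/andP; split.
  apply/andP; split; first exact: leR_op.
  by apply/existsP; exists (Some x); rewrite /= -A -s2 ve.
apply: (eqL_trans A (G1L bz)).
apply: (eqL_trans A (_ : eqL op y (op x y))); first by rewrite eqL_sym; exact: G1L ez.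
apply: (eqL_trans A (_ : eqL op (op x y) x)); first by rewrite s2; exact: G1L ez'.
exact: G1L xz.
Qed.

Lemma B_noinv : ~ has_involution_matching op -> ~ has_involution_matching opB.
Proof.
move=> nS [psi [[_ Hi] Hii]]; apply: nS.
pose vv a := val (psi (qB a)).
have EXa a : exists b, sinv op a b && eqH op b (vv a).
  have /invB [h1 h2] := Hi (qB a).
  have ea : eqH op a (rep a) := eqH_rep a.
  apply: EX.
    apply: (eqH_trans A (cong (cong ea (eqH_refl op _)) ea)).
    apply: (eqH_trans A h1); by rewrite eqH_sym.
  exact: (eqH_trans A (cong (cong (eqH_refl op _) ea) (eqH_refl op _)) h2).
pose th a := odflt a [pick b | sinv op a b && eqH op b (vv a)].
have thP a : sinv op a (th a) && eqH op (th a) (vv a).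
  rewrite /th; case: pickP => [b ->|Hn] //=.
  by have [b Hb] := EXa a; rewrite Hn in Hb.
have qth a : qB (th a) = psi (qB a).
  rewrite -(qB_val (psi (qB a))); apply/qB_eq; by case/andP: (thP a).
have thth a : th (th a) = a.
  have /andP[i1 e1] := thP (th a).
  have /andP[i0 e0] := thP a.
  have vt : vv (th a) = rep a by rewrite /vv qth Hii.
  rewrite vt in e1.
  apply: (UN A i1); first by rewrite inv_sym.
  apply: (eqH_trans A e1); rewrite eqH_sym; exact: eqH_rep.
exists th; split; last exact: thth.
split; first exact: inv_bij thth.
by move=> a; apply: sinvP; case/andP: (thP a).
Qed.

Lemma B_small : (exists a b, a != b /\ eqH op a b) -> #|{: B}| < #|T|.
Proof.
case=> a [b [nab hab]].
have [x hx] : exists x, rep x != x.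
  case: (boolP (rep a == a)) => [/eqP ra|]; last by exists a.
  exists b; apply: contra nab => /eqP rb.
  by rewrite -ra -rb (rep_eqH hab).
rewrite card_sig.
have : 0 < #|[predC [pred y | rep y == y]]| by apply/card_gt0P; exists x; rewrite !inE.
have := cardC [pred y | rep y == y].
move=> h1 h2; by rewrite -h1 -[X in X < _]addn0 ltn_add2l.
Qed.

Lemma Hs_eq x y : x != z -> y != z -> Hs op x = Hs op y.
Proof.
move=> nx ny.
have /andP[_ /existsP[s /existsP[t /eqP E]]] := Hj nx ny.
pose w := rm op t x.
have Ey : y = lm op s w by rewrite E (lm_rm A).
have wz : w != z by apply: contra ny => /eqP Ew; rewrite Ey Ew lmz.
have key : forall t', rm op t' x != z -> eqR op x (rm op t' x).
  by case=> [t'|] /= h; [rewrite eqR_sym; exact: G1R | exact: eqR_refl].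
have keyL : forall s' w', lm op s' w' != z -> eqL op w' (lm op s' w').
  by case=> [s'|] w' /= h; [rewrite eqL_sym; exact: G1L | exact: eqL_refl].
have eR : eqR op x w := key t wz.
have eL : eqL op w y by rewrite Ey; apply: keyL; rewrite -Ey.
by rewrite (greenR_eq A eR) (greenL_eq A eL).
Qed.

Lemma B_pm phi : permutation_matching op phi -> forall w0, w0 != z ->
  has_permutation_matching opB.
Proof.
move=> [bphi Hinv] w0 nw0.
pose AB (u : B) := [set v : B | eqH op (op (op (val u) (val v)) (val u)) (val u) &&
                                eqH op (op (op (val v) (val u)) (val v)) (val v)].
pose qz := qB z.
have vqz : val qz = z := rep_z.
have vnz u : (u != qz) = (val u != z).
  apply/idP/idP; apply: contra => /eqP E; apply/eqP; last by rewrite E.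
  by apply: val_inj; rewrite E vqz.
have Z1 : qz \in AB qz by rewrite inE vqz !opzl eqH_refl.
have Z2 u v : u != qz -> v \in AB u -> v != qz.
  move=> nu; rewrite inE => /andP[h _]; apply: contra nu => /eqP Ev.
  move: h; rewrite Ev vqz opzr opzl => /eqHz E; apply/eqP; apply: val_inj; by rewrite E vqz.
set c := Hs op w0.
have c0 : 0 < c by apply/card_gt0P; exists w0; rewrite inE eqH_refl.
have fib u : u != qz -> #|[set a | qB a == u]| = c.
  move=> nu; rewrite /c (Hs_eq nw0 (_ : val u != z)); last by rewrite -vnz.
  rewrite /Hs; apply: eq_card => a; rewrite !inE; apply/eqP/idP => [E|h].
    by apply/qB_eq; rewrite qB_val.
  by rewrite -(qB_val u); apply/qB_eq.
have cnt (Q : {set B}) : qz \notin Q -> #|[set a | qB a \in Q]| = #|Q| * c.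
  move=> nQ.
  rewrite -sum1_card (partition_big qB (mem Q)) /=; last by move=> a; rewrite inE.
  rewrite -sum_nat_const; apply: eq_bigr => u uQ.
  rewrite -(fib u); last by apply: contra nQ => /eqP <-.
  rewrite -sum1_card; apply: eq_bigl => a; rewrite !inE.
  by case: (qB a =P u) => [->|]; rewrite ?uQ ?andbF.
have nN (P : {set B}) : qz \notin P -> qz \notin Nb AB P.
  move=> nP; apply/bigcupP => -[u uP vA].
  have nu : u != qz by apply: contra nP => /eqP <-.
  by have := Z2 u qz nu vA; rewrite eqxx.
have main (P : {set B}) : qz \notin P -> #|P| <= #|Nb AB P|.
  move=> nP.
  rewrite -(leq_pmul2r c0) -cnt // -cnt; last exact: nN.
  rewrite -(card_imset _ (bij_inj bphi)); apply: subset_leq_card.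
  apply/subsetP => b /imsetP[a ha ->]; move: ha; rewrite inE => ha.
  rewrite inE; apply/bigcupP; exists (qB a) => //.
  have [h1 h2] := Hinv a.
  have ea := eqH_rep a; have eb := eqH_rep (phi a).
  rewrite inE /=; apply/andP; split.
    have := cong (cong ea eb) ea; rewrite h1 eqH_sym => h; exact: (eqH_trans A h ea).
  have := cong (cong eb ea) eb; rewrite h2 eqH_sym => h; exact: (eqH_trans A h eb).
have H : forall P : {set B}, #|P| <= #|Nb AB P|.
  move=> P; case: (boolP (qz \in P)) => hP; last exact: main.
  have hPq : qz \notin P :\ qz by rewrite !inE eqxx.
  have m := main (P :\ qz) hPq.
  rewrite (cardsD1 qz P) hP add1n.
  have sub : qz |: Nb AB (P :\ qz) \subset Nb AB P.
    apply/subsetP => v; rewrite !inE => /orP[/eqP->|/bigcupP[u]].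
      by apply/bigcupP; exists qz.
    by rewrite !inE => /andP[_ uP] vA; apply/bigcupP; exists u => //; rewrite inE.
  have nq : qz \notin Nb AB (P :\ qz) by apply: nN.
  have := subset_leq_card sub; rewrite cardsU1 nq add1n => h; exact: leq_ltn_trans m h.
have [f [fi fm]] := hall qz H.
exists f; split; first exact: injF_bij fi.
by move=> u; apply/invB; move: (fm u); rewrite inE => /andP[].
Qed.

End ZeroSec.

Lemma greenH_eqH (T : finType) (op : T -> T -> T) a b : greenH op a b -> eqH op a b.
Proof.
move=> [HR HL]; apply/andP; split; apply/andP; split.
- by case: ((HR a).1 (or_introl erefl)) => [->|[s ->]]; [exact: leR_refl|exact: leR_op].
- by case: ((HR b).2 (or_introl erefl)) => [->|[s ->]]; [exact: leR_refl|exact: leR_op].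
- by case: ((HL a).1 (or_introl erefl)) => [->|[s ->]]; [exact: leL_refl|exact: leL_op].
- by case: ((HL b).2 (or_introl erefl)) => [->|[s ->]]; [exact: leL_refl|exact: leL_op].
Qed.

Lemma pm_regular (T : finType) (op : T -> T -> T) : has_permutation_matching op -> regular_sg op.
Proof. by case=> phi [_ H] a; exists (phi a); case: (H a). Qed.

Unset Implicit Arguments.
Theorem proposition2p1 (T : finType) (op : T -> T -> T) :
  semigroup op -> regular_sg op ->
  has_permutation_matching op -> ~ has_involution_matching op ->
  (forall (T' : finType) (op' : T' -> T' -> T'),
      semigroup op' -> regular_sg op' ->
      has_permutation_matching op' -> ~ has_involution_matching op' ->
      #|T| <= #|T'|) ->
  zero_rectangular_band op.
Proof.
move=> A _ [phi Hphi] noinv minim.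
have [a0 na0] : exists a0, ~~ hasInvC op (Jcls op a0).
  case: (boolP [forall a, hasInvC op (Jcls op a)]) => [/forallP h|].
    by exfalso; apply: noinv; apply: (glue A).
  by rewrite negb_forall => /existsP.
set J := Jcls op a0.
have [a1 a1J a1n] : exists2 a1, a1 \in J & op a1 a1 \notin J.
  case: (boolP [forall a in J, op a a \in J]) => [/forallP h|].
    exfalso; move/negP: na0; apply; apply: (hasInvC_sq A) => a aJ.
    by have := h a; rewrite aJ.
  rewrite negb_forall => /existsP[a]; rewrite negb_imply => /andP[aJ na].
  by exists a.
have Hsand : forall x y w, x \in J -> w \in J -> leJ op w y -> leJ op y x -> y \in J.
  move=> x y w; rewrite !inJ => hx hw wy yx; apply/andP; split.
    by apply: (leJ_trans A _ wy); case/andP: hw.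
  by apply: (leJ_trans A yx); case/andP: hx.
have eqphi x : eqJ op x (phi x).
  by apply: inv_eqJ; have [h1 h2] := Hphi.2 x; rewrite /sinv h1 h2 !eqxx.
have HJphi : forall x, (phi x \in J) = (x \in J).
  move=> x; rewrite !inJ; apply/idP/idP => h.
    by apply: (eqJ_trans A h); rewrite eqJ_sym.
  exact: (eqJ_trans A h (eqphi x)).
have bound : #|T| <= #|J|.+1.
  rewrite -(card_J0 J); apply: (minim _ (op0 op (J:=J))).
  - exact: (op0_assoc A Hsand).
  - apply: pm_regular; exists (phi0 phi); exact: (phi0_pm Hsand Hphi HJphi).
  - exists (phi0 phi); exact: (phi0_pm Hsand Hphi HJphi).
  - exact: (J0_noinv Hsand na0).
set z := op a1 a1.
have cover : forall x, x \in J \/ x = z.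
  move=> x.
  have h1 : #|z |: J| = #|J|.+1 by rewrite cardsU1 a1n.
  have h := cardsC (z |: J).
  have h0 : #|~: (z |: J)| = 0 by lia.
  have := card0_eq h0 x; rewrite !inE => /negbFE /orP[/eqP->|]; by [right|left].
have zJ : forall x, x != z -> x \in J.
  by move=> x nx; case: (cover x) => // E; rewrite E eqxx in nx.
have a1z : leJ op z a1 by apply: leJ_R; exact: leR_op.
have notJ : forall w, w \in J -> leJ op w z -> False.
  move=> w wJ wz; move/negP: a1n; apply; rewrite inJ; apply/andP; split.
    by apply: (leJ_trans A _ wz); move: wJ; rewrite inJ => /andP[].
  by apply: (leJ_trans A a1z); move: a1J; rewrite inJ => /andP[].
have Hz : forall x, op z x = z /\ op x z = z.
  move=> x; split.
    case: (cover (op z x)) => // h; exfalso; apply: (notJ _ h).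
    by apply: leJ_R; exact: leR_op.
  case: (cover (op x z)) => // h; exfalso; apply: (notJ _ h).
  by apply: leJ_L; exact: leL_op.
have Hj : forall x y, x != z -> y != z -> eqJ op x y.
  move=> x y /zJ; rewrite inJ eqJ_sym => hx /zJ; rewrite inJ => hy.
  exact: (eqJ_trans A hx hy).
have a1nz : a1 != z by apply/eqP => E; move: a1n; rewrite -/z -E a1J.
split.
  exists z; split.
    split; first exact: Hz.
    split.
      exists a1, (phi a1) => E; have [h1 _] := Hphi.2 a1.
      by move: h1; rewrite E (Hz a1).1 => E'; rewrite E' eqxx in a1nz.
    move=> I [nI HI].
    case: (boolP [exists x in I, x != z]) => [/existsP[x /andP[xI nx]]|hn].
      right; apply/setP => y; rewrite inE.
      case: (y =P z) => [->|/eqP ny].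
        by have := (HI x z xI).2; rewrite (Hz x).2.
      have /andP[_ /existsP[s /existsP[t /eqP->]]] := Hj _ _ nx ny.
      have cl1 s' w : w \in I -> lm op s' w \in I by move=> h; case: s' => [s'|] //=; exact: (HI w s' h).1.
      have cl2 t' w : w \in I -> rm op t' w \in I by move=> h; case: t' => [t'|] //=; exact: (HI w t' h).2.
      by apply: cl2; apply: cl1.
    left; apply/setP => y; rewrite inE; apply/idP/eqP => [yI|->].
      apply/eqP; move: hn; rewrite negb_exists => /forallP /(_ y); by rewrite yI /= negbK.
    case/set0Pn: nI => x xI; move: hn; rewrite negb_exists => /forallP /(_ x).
    by rewrite xI /= negbK => /eqP <-.
  have [h1 h2] := Hphi.2 a1.
  exists (op a1 (phi a1)); split; first by rewrite /Defs.idempotent A h1.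
  split.
    move=> E; move: h1; rewrite E (Hz a1).1 => E'; by rewrite E' eqxx in a1nz.
  move=> f fid fz ef fe.
  have ez : op a1 (phi a1) != z.
    apply/eqP => E; move: h1; rewrite E (Hz a1).1 => E'; by rewrite E' eqxx in a1nz.
  have /andP[hJ _] := Hj _ _ ez (introN eqP fz).
  rewrite -{1}ef in hJ.
  have [u Hu] := stabR A hJ.
  rewrite ef in Hu.
  by rewrite -fe {1}Hu A fid -Hu.
move=> a b Hg; apply/eqP; apply/negPn/negP => nab.
have hab := greenH_eqH Hg.
have small := B_small A (ex_intro _ a (ex_intro _ b (conj nab hab))).
have := minim _ (opB A) (opB_assoc A Hz Hj)
  (pm_regular (B_pm A Hz Hj Hphi a1nz)) (B_pm A Hz Hj Hphi a1nz) (B_noinv (A := A) Hz Hj noinv).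
move=> h; by have := leq_ltn_trans h small; rewrite ltnn.
Qed.
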